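(* Let $\mathcal{C}=\{x\mapsto x_i: i\in[n]\}$ be the class of monotone dictators on $\{0,1\}^n$. There exists a distribution $D$ on $\{0,1\}^n$ and a target concept $c\in\mathcal{C}$ such that 1-robustly learning $(c,D)$ requires at most one query to the 1-local equivalence query oracle, but, for any learning algorithm, at least $\log n$ queries to the equivalence query oracle.
   Context: $B_r(x)$ is the Hamming ball of radius $r$ around $x$. The 1-robust risk is $\mathsf{R}_1(h,c)=\Pr_{x\sim D}[\exists z\in B_1(x):h(z)\ne c(z)]$; 1-robustly learning $(c,D)$ means outputting a hypothesis with small 1-robust risk (here, since $D$ may be concentrated on a point, this may require agreeing with $c$ on a Hamming ball). The learner has access to the example oracle returning $(x,c(x))$, $x\sim D$. Given a sample $S$, the 1-local equivalence query oracle, queried with $(h,x)$ for $x\in S$, either confirms that $h$ and $c$ agree on $B_1(x)$ or returns $z\in B_1(x)$ with $h(z)\ne c(z)$. The equivalence query oracle, queried with any hypothesis $h:\{0,1\}^n\to\{0,1\}$, either confirms $h=c$ on all of $\{0,1\}^n$ or returns some $z$ with $h(z)\ne c(z)$; the oracle may choose counterexamples adaptively and adversarially, subject only to the sequence of counterexamples remaining consistent with some concept in $\mathcal{C}$ (and with the labels on the support of $D$). Learners are allowed to output hypotheses outside $\mathcal{C}$. *)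

(* Defs.v *)
From mathcomp Require Import all_boot all_order all_algebra.
Set Implicit Arguments. Unset Strict Implicit. Unset Printing Implicit Defensive.
Import Order.TTheory GRing.Theory Num.Theory.
Local Open Scope ring_scope.

Definition pt (n : nat) := {ffun 'I_n -> bool}.

Definition dict (n : nat) (i : 'I_n) : pt n -> bool := fun x => x i.

Definition hamming (n : nat) (x z : pt n) : nat := #|[pred j | x j != z j]|.
Definition ball1 (n : nat) (x : pt n) : pred (pt n) :=
  [pred z | (hamming x z <= 1)%N].

Definition is_distr (R : realFieldType) (n : nat) (D : {ffun pt n -> R}) : Prop :=
  (forall x, 0 <= D x) /\ \sum_x D x = 1.

Definition rrisk (R : realFieldType) (n : nat) (D : {ffun pt n -> R})
    (h c : pt n -> bool) : R :=
  \sum_(x | [exists z, (z \in ball1 x) && (h z != c z)]) D x.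

Definition agrees_on_supp (R : realFieldType) (n : nat) (D : {ffun pt n -> R})
    (c c' : pt n -> bool) : Prop :=
  forall x, 0 < D x -> c' x = c x.

Definition valid_sample (R : realFieldType) (n : nat) (D : {ffun pt n -> R})
    (c : pt n -> bool) (m : nat) (S : seq (pt n * bool)) : Prop :=
  size S = m /\ forall p, p \in S -> 0 < D p.1 /\ p.2 = c p.1.

(* Transcript of oracle answers: None = "confirmed", Some z = counterexample. *)
Definition history (n : nat) := seq (option (pt n)).

(* A (deterministic) learner: chooses a sample size m, receives a labelled
   sample S from the example oracle, then acts as a function of S and of the
   transcript of oracle answers so far. *)
Record learner (n : nat) (A : Type) := Learner {
  lsize : nat;
  lstrat : seq (pt n * bool) -> history n -> A }.

Inductive eq_action (n : nat) :=
| EQAsk of (pt n -> bool)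
| EQStop of (pt n -> bool).

Definition eq_oracle (n : nat) := history n -> (pt n -> bool) -> option (pt n).

Definition valid_eq_oracle (n : nat) (c : pt n -> bool) (O : eq_oracle n) : Prop :=
  forall hist g, match O hist g with
                 | None => forall z, g z = c z
                 | Some z => is_true (g z != c z)
                 end.

Inductive eq_run (n : nat) (L : history n -> eq_action n) (O : eq_oracle n)
  : history n -> nat -> (pt n -> bool) -> Prop :=
| eq_run_stop hist h : L hist = EQStop h -> eq_run L O hist 0 h
| eq_run_ask hist g q h :
    L hist = EQAsk g -> eq_run L O (rcons hist (O hist g)) q h ->
    eq_run L O hist q.+1 h.

Definition eq_robust_learns (R : realFieldType) (n : nat) (D : {ffun pt n -> R})
    (c : pt n -> bool) (eps : R) (L : learner n (eq_action n)) : Prop :=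
  forall (j : 'I_n), agrees_on_supp D c (dict j) ->
  forall S, valid_sample D (dict j) (lsize L) S ->
  forall O, valid_eq_oracle (dict j) O ->
  exists q h, eq_run (lstrat L S) O [::] q h /\ rrisk D h (dict j) <= eps.

Inductive leq_action (n : nat) :=
| LEQAsk of (pt n -> bool) & pt n
| LEQStop of (pt n -> bool).

Definition leq_oracle (n : nat) :=
  history n -> (pt n -> bool) -> pt n -> option (pt n).

Definition valid_leq_oracle (n : nat) (c : pt n -> bool) (O : leq_oracle n) : Prop :=
  forall hist g x, match O hist g x with
                   | None => forall z, z \in ball1 x -> g z = c z
                   | Some z => is_true ((z \in ball1 x) && (g z != c z))
                   end.

Inductive leq_run (n : nat) (S : seq (pt n * bool)) (L : history n -> leq_action n)
    (O : leq_oracle n) : history n -> nat -> (pt n -> bool) -> Prop :=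
| leq_run_stop hist h : L hist = LEQStop h -> leq_run S L O hist 0 h
| leq_run_ask hist g x q h :
    L hist = LEQAsk g x -> x \in [seq p.1 | p <- S] ->
    leq_run S L O (rcons hist (O hist g x)) q h ->
    leq_run S L O hist q.+1 h.

Definition leq_robust_learns_within (R : realFieldType) (n : nat)
    (D : {ffun pt n -> R}) (c : pt n -> bool) (eps : R) (k : nat)
    (L : learner n (leq_action n)) : Prop :=
  forall (j : 'I_n), agrees_on_supp D c (dict j) ->
  forall S, valid_sample D (dict j) (lsize L) S ->
  forall O, valid_leq_oracle (dict j) O ->
  exists q h, leq_run S (lstrat L S) O [::] q h /\ (q <= k)%N /\
              rrisk D h (dict j) <= eps.

(* Main.v *)
Require Import Defs.
From mathcomp Require Import all_boot all_order all_algebra zify.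
Import Order.TTheory GRing.Theory Num.Theory.
Local Open Scope ring_scope.
Set Implicit Arguments. Unset Strict Implicit. Unset Printing Implicit Defensive.

Fixpoint fromb (l : seq bool) : nat :=
  match l with [::] => 0%N | b :: l => (b + 2 * fromb l)%N end.

Lemma frombP l s : odd (fromb l %/ 2 ^ s) = nth false l s.
Proof.
elim: l s => [|b l IH] s /=; first by rewrite div0n nth_nil.
case: s => [|s].
  by rewrite expn0 divn1 oddD oddM /= addbF; case: b.
rewrite expnS divnMA /= -IH; congr (odd (_ %/ _)).
rewrite addnC mulnC divnMDl // divn_small ?addn0 //; by case: b.
Qed.

Lemma fromb_lt l : (fromb l < 2 ^ size l)%N.
Proof.
elim: l => [|b l IH] //=; rewrite expnS.
have : (b <= 1)%N by case: b.
lia.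
Qed.

Section S.
Variable n : nat.

Definition x0 : pt n := [ffun _ => false].
Definition ev (j : 'I_n) : pt n := [ffun k => k == j].
Definition zv (s : nat) : pt n := [ffun k : 'I_n => odd (k %/ 2 ^ s)].
Definition hs (s : nat) : history n := mkseq (fun k => Some (zv k)) s.

Lemma ball_ev j : ev j \in ball1 x0.
Proof.
rewrite inE /hamming.
have -> : #|[pred k | x0 k != ev j k]| = #|pred1 j|.
  by apply: eq_card => k; rewrite !inE !ffunE; case: (k == j).
by rewrite card1.
Qed.

Lemma ball_one (y : pt n) j : y \in ball1 x0 -> y j -> y = ev j.
Proof.
rewrite inE /hamming => /card_le1_eqP H yj.
apply/ffunP => k; rewrite ffunE.
case: eqP => [->//|/eqP kj].
apply/negP => yk.
have := H k j; rewrite !inE !ffunE /= yk yj => /(_ isT isT) E.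
by rewrite E eqxx in kj.
Qed.

Lemma ball_eq (y z : pt n) j : y \in ball1 x0 -> z \in ball1 x0 -> z j ->
  (y == z) = y j.
Proof.
move=> yb zb zj.
case yj: (y j).
  by rewrite (ball_one yb yj) (ball_one zb zj) eqxx.
by apply/eqP => E; rewrite E zj in yj.
Qed.

Lemma hsS s : hs s.+1 = rcons (hs s) (Some (zv s)).
Proof. by rewrite /hs mkseqS. Qed.

Lemma eq_run_det (L : history n -> eq_action n) (O : eq_oracle n) hist q h : eq_run L O hist q h ->
  forall q' h', eq_run L O hist q' h' -> q = q' /\ h = h'.
Proof.
elim => {hist q h} [hist h Lh|hist g q h Lg _ IH] q' h' H2.
  inversion H2; subst; first by split=> //; congruence.
  by congruence.
inversion H2; subst; first by congruence.
have eg : g = g0 by congruence.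
subst g0.
by have [-> ->] := IH _ _ H0.
Qed.

Lemma transfer (L : history n -> eq_action n) (O1 O2 : eq_oracle n) q : forall t h,
  (forall s g, (t <= s < t + q)%N -> L (hs s) = EQAsk g ->
     O1 (hs s) g = Some (zv s) /\ O2 (hs s) g = Some (zv s)) ->
  eq_run L O1 (hs t) q h -> eq_run L O2 (hs t) q h.
Proof.
elim: q => [|q IH] t h HO H.
  inversion H; subst; exact: eq_run_stop.
inversion H; subst.
have [E1 E2] := HO t g ltac:(lia) H1.
apply: (eq_run_ask H1).
rewrite E2 -hsS; apply: IH; last by rewrite hsS -E1.
move=> s g' hs' Lg'; apply: HO => //; lia.
Qed.

End S.

Definition Dpt (R : realFieldType) n : {ffun pt n -> R} :=
  [ffun x => if x == x0 n then 1 else 0].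

Lemma Dpt_pos (R : realFieldType) n x : 0 < Dpt R n x -> x = x0 n.
Proof. by rewrite ffunE; case: eqP => // _; rewrite ltxx. Qed.

Lemma rrisk_pt (R : realFieldType) n h c :
  rrisk (Dpt R n) h c =
  if [exists z, (z \in ball1 (x0 n)) && (h z != c z)] then 1 else 0.
Proof.
rewrite /rrisk; case: ifP => P.
  rewrite (bigD1 (x0 n)) //= ffunE eqxx big1 ?addr0 // => x /andP[_ /negbTE].
  by rewrite ffunE => ->.
by apply: big1 => x; rewrite ffunE; case: eqP => // ->; rewrite P.
Qed.

Lemma Dpt_distr (R : realFieldType) n : is_distr (Dpt R n).
Proof.
split=> [x|]; first by rewrite ffunE; case: ifP.
rewrite (bigD1 (x0 n)) //= ffunE eqxx big1 ?addr0 // => x /negbTE.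
by rewrite ffunE => ->.
Qed.

Theorem theorem6p13 (R : realFieldType) (n : nat) (hn : (0 < n)%N) :
  exists (D : {ffun pt n -> R}) (i : 'I_n),
    is_distr D /\
    (exists L : learner n (leq_action n),
        leq_robust_learns_within D (dict i) 0 1 L) /\
    (forall eps : R, eps < 1 ->
     forall L : learner n (eq_action n), eq_robust_learns D (dict i) eps L ->
     exists (j : 'I_n), agrees_on_supp D (dict i) (dict j) /\
     exists S, valid_sample D (dict j) (lsize L) S /\
     exists O, valid_eq_oracle (dict j) O /\
     forall q h, eq_run (lstrat L S) O [::] q h -> (trunc_log 2 n <= q)%N).
Proof.
have agr : forall i j : 'I_n, agrees_on_supp (Dpt R n) (dict i) (dict j).
  by move=> i j x /Dpt_pos ->; rewrite /dict !ffunE.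
exists (Dpt R n), (Ordinal hn); split; first exact: Dpt_distr.
split.
  pose strat (S : seq (pt n * bool)) (hist : history n) : leq_action n :=
    match hist with
    | [::] => LEQAsk (fun _ => false) (head (x0 n) [seq p.1 | p <- S])
    | Some z :: _ => LEQStop (fun y => y == z)
    | None :: _ => LEQStop (fun _ => false)
    end.
  exists (Learner 1 strat) => j _ S [sz vS] O vO.
  case: S sz vS => [|p [|//]] // _ vS.
  have [/Dpt_pos p1 _] := vS p (mem_head _ _).
  have := vO [::] (fun _ => false) (x0 n).
  case E: (O [::] (fun _ => false) (x0 n)) => [z|] H; last first.
    by have := H (ev j) (ball_ev j); rewrite /dict ffunE eqxx.
  move: H => /andP[zb zj].
  exists 1%N, (fun y => y == z); split; last split => //.
    apply: (leq_run_ask (g := fun _ => false) (x := x0 n)).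
    - by rewrite /= p1.
    - by rewrite /= p1 inE.
    rewrite /= E; exact: leq_run_stop.
  rewrite rrisk_pt; case: ifP => // /existsP[y /andP[yb]].
  rewrite /dict in zj *.
  have zj' : z j by move: zj; case: (z j).
  by rewrite (ball_eq yb zb zj') eqxx.
move=> eps heps L HL.
set T := trunc_log 2 n.
have T2 : (2 ^ T <= n)%N := trunc_logP (isT : (1 < 2)%N) hn.
set S := nseq (lsize L) (x0 n, false).
have vS : forall j, valid_sample (Dpt R n) (dict j) (lsize L) S.
  move=> j; split; first by rewrite size_nseq.
  move=> p /nseqP[-> _]; rewrite /= ffunE eqxx /dict ffunE; split => //; exact: ltr01.
pose Oj (j : 'I_n) : eq_oracle n := fun hist g =>
  let z := zv n (size hist) in if g z != z j then Some z else [pick z | g z != z j].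
have vO : forall j, valid_eq_oracle (dict j) (Oj j).
  move=> j hist g; rewrite /Oj; case: ifP => // _; case: pickP => // H z.
  by apply/eqP; rewrite -[_ == _]negbK H.
pose Ls := lstrat L S.
pose b s := match Ls (hs n s) with EQAsk g => ~~ g (zv n s) | EQStop _ => false end.
have mkj : forall f : nat -> bool, (fromb (mkseq f T) < n)%N.
  move=> f; apply: leq_trans (fromb_lt _) _; by rewrite size_mkseq.
pose j1 := Ordinal (mkj b).
have bitj : forall f s, (s < T)%N -> zv n s (Ordinal (mkj f)) = f s.
  by move=> f s sT; rewrite ffunE /= frombP nth_mkseq.
have Oeq : forall f j s g, (s < T)%N -> j = Ordinal (mkj f) -> f s = b s ->
    Ls (hs n s) = EQAsk g -> Oj j (hs n s) g = Some (zv n s).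
  move=> f j s g sT -> fb Lg; rewrite /Oj size_mkseq bitj // fb /b Lg.
  by case: (g _).
exists j1; split; first exact: agr.
exists S; split; first exact: vS.
exists (Oj j1); split; first exact: vO.
move=> q h run; rewrite leqNgt; apply/negP => qT.
pose b2 t := if t == q then ~~ b t else b t.
pose j2 := Ordinal (mkj b2).
have run2 : eq_run Ls (Oj j2) [::] q h.
  apply: (@transfer n Ls (Oj j1) (Oj j2) q 0) run => s g /andP[_ sq] Lg; split.
    by apply: (Oeq b) => //; lia.
  apply: (Oeq b2) => //; first lia.
  by rewrite /b2; case: eqP => // E; subst; lia.
have [q1 [h1 [r1 k1]]] := HL j1 (agr _ _) S (vS j1) (Oj j1) (vO j1).
have [q2 [h2 [r2 k2]]] := HL j2 (agr _ _) S (vS j2) (Oj j2) (vO j2).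
have [_ e1] := eq_run_det run r1.
have [_ e2] := eq_run_det run2 r2.
subst h1 h2.
rewrite rrisk_pt in k1; rewrite rrisk_pt in k2.
suff : [exists z, (z \in ball1 (x0 n)) && (h z != dict j1 z)] ||
       [exists z, (z \in ball1 (x0 n)) && (h z != dict j2 z)].
  case/orP => E; [move: k1|move: k2]; rewrite E => /le_lt_trans/(_ heps);
    by rewrite ltxx.
have neq : j1 != j2.
  apply/negP => /eqP E.
  have := congr1 (fun j : 'I_n => zv n q j) E.
  by rewrite /= !bitj // /b2 eqxx; case: (b q).
case hj: (h (ev j1)); apply/orP; [right|left]; apply/existsP; exists (ev j1);
  rewrite ball_ev /dict ffunE hj //=; try rewrite eqxx //.
by rewrite [j2 == j1]eq_sym (negbTE neq).
Qed.
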